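(* The class of locally convex spaces having a fundamental bounded resolution is closed under taking (i) (linear) subspaces, (ii) countable locally convex direct sums, and (iii) countable products.
   Context: Order $\mathbb{N}^{\mathbb{N}}$ pointwise. A resolution in a set $\Omega$ is a family $\{A_\alpha:\alpha\in\mathbb{N}^{\mathbb{N}}\}$ of subsets covering $\Omega$ with $A_\alpha\subseteq A_\beta$ whenever $\alpha\le\beta$. A locally convex space $E$ has a fundamental bounded resolution if it has a resolution consisting of bounded subsets of $E$ such that every bounded subset of $E$ is contained in some member of the resolution. *)

(* Defs.v *)
From HB Require Import structures.
From mathcomp Require Import all_boot all_order all_algebra.
From mathcomp Require Import all_classical all_reals all_analysis.
Set Implicit Arguments. Unset Strict Implicit. Unset Printing Implicit Defensive.
Import Order.TTheory GRing.Theory Num.Theory.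
Local Open Scope classical_set_scope.
Local Open Scope ring_scope.

(** Generic notions, relative to a scalar action [scale] and a filter base
    [N] of neighbourhoods of the origin, on a carrier set [S] (the space). *)

Definition vbounded (R : realType) (V : Type) (scale : R -> V -> V)
    (N : set_system V) (B : set V) : Prop :=
  forall U, N U -> exists r : R, 0 < r /\
    forall t : R, r < `|t| -> B `<=` scale t @` U.

Definition le_seq (a b : nat -> nat) : Prop := forall n, (a n <= b n)%N.

Definition fbr_on (R : realType) (V : Type) (scale : R -> V -> V)
    (N : set_system V) (S : set V) : Prop :=
  exists A : (nat -> nat) -> set V,
    (forall a b, le_seq a b -> A a `<=` A b) /\
    (forall a, A a `<=` S) /\
    (S `<=` \bigcup_a A a) /\
    (forall a, vbounded scale N (A a)) /\
    (forall B, B `<=` S -> vbounded scale N B -> exists a, B `<=` A a).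

(** A locally convex space (mathcomp-analysis [tvsType], which is locally
    convex by definition) has a fundamental bounded resolution. *)
Definition has_fbr (R : realType) (E : tvsType R) : Prop :=
  fbr_on (fun (t : R) (x : E) => t *: x) (nbhs (0 : E)) setT.

Definition linear_subspace (R : realType) (E : lmodType R) (F : set E) : Prop :=
  F 0 /\ (forall x y, F x -> F y -> F (x + y)) /\
  (forall (t : R) x, F x -> F (t *: x)).

Definition subspace_nbhs0 (R : realType) (E : tvsType R) (F : set E)
  : set_system E :=
  fun U => exists V, nbhs (0 : E) V /\ V `&` F `<=` U.

Definition pscale (R : realType) (E : nat -> tvsType R)
    (t : R) (x : forall n, E n) : forall n, E n :=
  fun n => t *: x n.

Definition prod_nbhs0 (R : realType) (E : nat -> tvsType R)
  : set_system (forall n, E n) :=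
  fun U => exists (k : nat) (W : forall n, set (E n)),
    (forall n, nbhs (0 : E n) (W n)) /\
    [set x | forall n, (n < k)%N -> W n (x n)] `<=` U.

(** carrier of the direct sum: finitely supported sequences *)
Definition finsupp (R : realType) (E : nat -> tvsType R)
  : set (forall n, E n) :=
  fun x => exists k, forall n, (k <= n)%N -> x n = 0.

Definition absconvex (R : realType) (E : lmodType R) (U : set E) : Prop :=
  forall x y (a b : R), U x -> U y -> `|a| + `|b| <= 1 -> U (a *: x + b *: y).

(** absolutely convex hull of the union of the canonical images of the
    absolutely convex sets W n in the direct sum *)
Definition dsum_hull (R : realType) (E : nat -> tvsType R)
    (W : forall n, set (E n)) : set (forall n, E n) :=
  fun x => exists (k : nat) (l : nat -> R),
    (forall n, (k <= n)%N -> x n = 0 /\ l n = 0) /\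
    \sum_(n < k) `|l n| <= 1 /\
    (forall n, exists u, W n u /\ x n = l n *: u).

Definition dsum_nbhs0 (R : realType) (E : nat -> tvsType R)
  : set_system (forall n, E n) :=
  fun U => exists W : forall n, set (E n),
    (forall n, nbhs (0 : E n) (W n) /\ absconvex (W n)) /\
    dsum_hull W `<=` U.

(* Main.v *)
Require Import Defs.
From HB Require Import structures.
From mathcomp Require Import all_boot all_order all_algebra.
From mathcomp Require Import all_classical all_reals all_analysis.
From mathcomp Require Import ring lra.
From Stdlib Require PeanoNat.
Import Order.TTheory GRing.Theory Num.Theory.
Local Open Scope classical_set_scope.
Local Open Scope ring_scope.

Set Implicit Arguments. Unset Strict Implicit. Unset Printing Implicit Defensive.
Section Helpers.
Variable R : realType.

Lemma conv_step (E : tvsType R) (b : set E) (x y : E) (l : R) :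
  convex_set (b : set (convex_lmodType E)) -> b x -> b y -> 0 <= l -> l <= 1 ->
  b (l *: x + (1 - l) *: y).
Proof.
move=> cb bx by0 l0 l1.
have := cb x y (Itv01 l0 l1) (mem_set bx) (mem_set by0).
by rewrite inE.
Qed.

Lemma conv_pos (E : tvsType R) (b : set E) (x y : E) (p q : R) :
  convex_set (b : set (convex_lmodType E)) -> b 0 -> b x -> b y ->
  0 <= p -> 0 <= q -> p + q <= 1 -> b (p *: x + q *: y).
Proof.
move=> cb b0 bx by0 p0 q0 pq.
have [s0|sn0] := eqVneq (p + q) 0.
  have -> : p = 0 by lra.
  have -> : q = 0 by lra.
  by rewrite !scale0r addr0.
have sp : 0 < p + q by rewrite lt_neqAle eq_sym sn0 /=; lra.
have z : b ((p / (p + q)) *: x + (1 - p / (p + q)) *: y).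
  apply: conv_step => //.
    by apply: divr_ge0 => //; lra.
  by rewrite ler_pdivrMr // mul1r; lra.
have := conv_step cb z b0 (ltW sp) pq.
rewrite scaler0 addr0 scalerDr !scalerA.
have -> : (p + q) * (p / (p + q)) = p by field; lra.
have -> : (p + q) * (1 - p / (p + q)) = q by field; lra.
done.
Qed.

Lemma signed_pt (E : tvsType R) (b : set E) (x : E) (a : R) :
  b x -> b (- x) -> exists x', b x' /\ a *: x = `|a| *: x'.
Proof.
move=> bx bnx; case: (leP 0 a) => h.
  by exists x; rewrite ger0_norm.
by exists (- x); rewrite ltr0_norm // scaleNr scalerN opprK.
Qed.

Lemma nbhs0_neg (E : tvsType R) (W : set E) :
  nbhs (0:E) W -> nbhs (0:E) [set x | W (- x)].
Proof.
move=> W0; have := nbhs0N W0; apply: filterS => x [w Ww <-] /=.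
by rewrite opprK.
Qed.

Lemma absconvex_nbhs (E : tvsType R) (W : set E) : nbhs (0:E) W ->
  exists V : set E, [/\ nbhs (0:E) V, absconvex V & V `<=` W].
Proof.
move=> W0.
have W2 : nbhs (0:E) (W `&` [set x | W (- x)]).
  by apply: filterI; [exact: W0 | exact: nbhs0_neg W0].
have [B Bc [Bo Bb]] := @locally_convex R E.
have [b [Bb0 b0] bW] := Bb 0 _ W2.
have nb : nbhs (0:E) b by apply: open_nbhs_nbhs; split => //; exact: Bo.
have cb := Bc b (mem_set Bb0).
exists [set x | b x /\ b (- x)]; split.
- by apply: filterI; [exact: nb | exact: nbhs0_neg nb].
- move=> x y a c [bx bnx] [by0 bny] h.
  have G : forall a c : R, `|a| + `|c| <= 1 -> b (a *: x + c *: y).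
    move=> a' c' h'.
    have [x' [bx' ->]] := signed_pt a' bx bnx.
    have [y' [by' ->]] := signed_pt c' by0 bny.
    by apply: conv_pos => //.
  split; first exact: G.
  rewrite opprD -!scaleNr; apply: G; by rewrite !normrN.
- by move=> x [bx _]; case: (bW x bx).
Qed.

Lemma balanced (E : tvsType R) (V : set E) (v : E) (a : R) :
  absconvex V -> V v -> `|a| <= 1 -> V (a *: v).
Proof.
move=> aV Vv ha; have := aV v v a 0 Vv Vv.
by rewrite normr0 addr0 scale0r addr0; apply.
Qed.

Lemma nbhs0_scale (E : tvsType R) (W : set E) (c : R) :
  nbhs (0:E) W -> nbhs (0:E) [set x | W (c *: x)].
Proof.
move=> W0; have [->|c0] := eqVneq c 0.
  apply: filterS (@filterT _ _ _) => x _ /=; rewrite scale0r.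
  exact: nbhs_singleton.
have := nbhs0Z (invr_neq0 c0) W0; apply: filterS => x [w Ww <-] /=.
by rewrite scalerA divff // scale1r.
Qed.

Definition nz (E : tvsType R) : set E := [set y | forall W, nbhs (0:E) W -> W y].

Lemma nzZ (E : tvsType R) (y : E) : nz y -> forall W, nbhs (0:E) W -> forall c, W (c *: y).
Proof. by move=> ny W W0 c; exact: (ny _ (nbhs0_scale c W0)). Qed.

Lemma nz0 (E : tvsType R) : nz (0 : E).
Proof. by move=> W W0; exact: nbhs_singleton. Qed.

Lemma img_scale (E : tvsType R) (U B : set E) (t : R) : t != 0 ->
  (forall b, B b -> U (t^-1 *: b)) -> B `<=` (fun x => t *: x) @` U.
Proof.
move=> t0 h b Bb; exists (t^-1 *: b); first exact: h.
by rewrite scalerA divff // scale1r.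
Qed.

Lemma finite_r (k : nat) (P : nat -> R -> Prop) :
  (forall n r r', P n r -> r <= r' -> P n r') ->
  (forall n, (n < k)%N -> exists r, 0 < r /\ P n r) ->
  exists r, 0 < r /\ forall n, (n < k)%N -> P n r.
Proof.
move=> mono; elim: k => [|k IH] h.
  by exists 1; split => // n.
have [r1 [r10 Hr1]] : exists r, 0 < r /\ forall n, (n < k)%N -> P n r.
  by apply: IH => n nk; apply: h; exact: ltnW.
have [r2 [r20 Hr2]] := h k (ltnSn k).
exists (r1 + r2); split; first lra.
move=> n; rewrite ltnS leq_eqVlt => /orP [/eqP ->|nk].
  by apply: mono Hr2 _; lra.
by apply: mono (Hr1 n nk) _; lra.
Qed.

Definition sub (a : nat -> nat) (n : nat) : nat -> nat := fun m => a (pickle (n, m)).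

Lemma combine (beta : nat -> nat -> nat) (k : nat) :
  exists a : nat -> nat, (k <= a 0)%N /\ forall n, le_seq (beta n) (sub a n).
Proof.
exists (fun j => maxn k (oapp (fun p : nat * nat => beta p.1 p.2) 0%N (unpickle j))).
split; first exact: leq_maxl.
by move=> n m; rewrite /sub pickleK /= leq_maxr.
Qed.

Lemma sub_mono (a b : nat -> nat) n : le_seq a b -> le_seq (sub a n) (sub b n).
Proof. by move=> h m; exact: h. Qed.

Lemma geom_sum (K : nat) : \sum_(n < K) ((2:R) ^+ n.+1)^-1 <= 1.
Proof.
suff : \sum_(n < K) ((2:R) ^+ n.+1)^-1 = 1 - ((2:R) ^+ K)^-1.
  move=> ->; rewrite lerBlDr lerDl invr_ge0; exact: exprn_ge0.
elim: K => [|K IH]; first by rewrite big_ord0 expr0 invr1 subrr.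
rewrite big_ord_recr /= IH exprS.
have h : (2:R) ^+ K != 0 by rewrite expf_neq0.
by field; rewrite h.
Qed.

Lemma term_le_sum (f : nat -> R) (k n : nat) : (forall m, 0 <= f m) ->
  (n < k)%N -> f n <= \sum_(m < k) f m.
Proof.
move=> f0; elim: k => [//|k IH].
rewrite ltnS leq_eqVlt big_ord_recr /= => /orP [/eqP ->|nk].
  by rewrite lerDr; apply: sumr_ge0 => i _.
by apply: le_trans (IH nk) _; rewrite lerDl.
Qed.

End Helpers.
Section Parts.
Variable R : realType.

Definition onlyat (E : nat -> tvsType R) (n : nat) (V : set (E n)) (m : nat) : set (E m) :=
  match PeanoNat.Nat.eq_dec m n with
  | left e => eq_rect_r (fun k => set (E k)) V e
  | right _ => setT end.
Arguments onlyat {E n} V m.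

Lemma onlyat_n (E : nat -> tvsType R) (n : nat) (V : set (E n)) : onlyat V n = V.
Proof.
rewrite /onlyat; case: PeanoNat.Nat.eq_dec => // e.
by rewrite (eq_irrelevance e erefl).
Qed.

Lemma onlyatP (E : nat -> tvsType R) (n : nat) (V : set (E n))
  (P : forall m, set (E m) -> Prop) :
  P n V -> (forall m, P m setT) -> forall m, P m (onlyat V m).
Proof.
move=> Pn PT m; case: (PeanoNat.Nat.eq_dec m n) => [e|ne].
  by subst m; rewrite onlyat_n.
by rewrite /onlyat; case: PeanoNat.Nat.eq_dec.
Qed.

Lemma t_neq0 (r t : R) : 0 < r -> r < `|t| -> t != 0.
Proof. by move=> r0 rt; rewrite -normr_gt0; apply: lt_trans rt. Qed.

Lemma part1 (E : tvsType R) (F : set E) : linear_subspace F -> has_fbr E ->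
  fbr_on (fun (t : R) (x : E) => t *: x) (subspace_nbhs0 F) F.
Proof.
move=> [F0 [FD FZ]] [A [Am [_ [Acov [Ab Af]]]]].
exists (fun a => A a `&` F); split; [|split;[|split;[|split]]].
- by move=> a b ab x [Ax Fx]; split => //; exact: Am ab x Ax.
- by move=> a x [].
- move=> x Fx; have [a _ Ax] := Acov x I; by exists a.
- move=> a U [V [V0 VU]]; have [r [r0 Hr]] := Ab a V V0; exists r; split => //.
  move=> t rt x [Ax Fx]; have [v Vv xe] := Hr t rt x Ax.
  have t0 := t_neq0 r0 rt.
  have ve : v = t^-1 *: x by rewrite -xe scalerA mulVf // scale1r.
  exists v => //; apply: VU; split => //; rewrite ve; exact: FZ.
- move=> B BF Bb.
  have hb : vbounded (fun (t : R) (x : E) => t *: x) (nbhs (0:E)) B.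
    move=> V V0.
    have [r [r0 Hr]] := Bb (V `&` F) (ex_intro _ V (conj V0 (fun x h => h))).
    exists r; split => // t rt x Bx; have [u [Vu _] <-] := Hr t rt x Bx.
    by exists u.
  have [a Ba] := Af B (fun _ _ => I) hb.
  by exists a => x Bx; split; [exact: Ba | exact: BF].
Qed.

Lemma part3 (E : nat -> tvsType R) : (forall n, has_fbr (E n)) ->
  fbr_on (@pscale R E) (@prod_nbhs0 R E) setT.
Proof.
move=> h.
pose A n := projT1 (cid (h n)).
have HA n : _ := projT2 (cid (h n)).
rewrite -/(A _) in HA.
exists (fun a => [set x | forall n, A n (sub a n) (x n)]).
split; [|split;[|split;[|split]]].
- move=> a b ab x Hx n; have [Am _] := HA n.
  exact: Am _ _ (sub_mono n ab) _ (Hx n).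
- by [].
- move=> x _.
  have : forall n, exists a, A n a (x n).
    move=> n; have [_ [_ [cov _]]] := HA n.
    by have [a _ ?] := cov (x n) I; exists a.
  case/choice => beta Hbeta.
  have [a [_ Ha]] := combine beta 0.
  exists a => // n; have [Am _] := HA n; exact: Am _ _ (Ha n) _ (Hbeta n).
- move=> a U [k [W [W0 WU]]].
  have [r [r0 Hr]] : exists r : R, 0 < r /\ forall n, (n < k)%N -> forall t, r < `|t| ->
      forall y, A n (sub a n) y -> W n (t^-1 *: y).
    apply: (@finite_r R k (fun n r => forall t, r < `|t| ->
      forall y, A n (sub a n) y -> W n (t^-1 *: y))).
  + move=> n r r' H rr' t rt y Ay; apply: H => //; lra.
  + move=> n _; have [_ [_ [_ [Ab _]]]] := HA n.
    have [r [r0 Hr]] := Ab (sub a n) (W n) (W0 n).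
    exists r; split => // t rt y Ay; have [w Ww e] := Hr t rt y Ay.
    by rewrite -e scalerA mulVf ?scale1r //; exact: t_neq0 r0 rt.
  exists r; split => // t rt x Hx.
  have t0 := t_neq0 r0 rt.
  exists (pscale t^-1 x).
    by apply: WU => n nk; exact: Hr n nk t rt _ (Hx n).
  apply: functional_extensionality_dep => n.
  by rewrite /pscale scalerA divff // scale1r.
- move=> B _ Bb.
  have : forall n, exists a, [set x n | x in B] `<=` A n a.
    move=> n; have [_ [_ [_ [_ Af]]]] := HA n; apply: Af => //.
    move=> W W0.
    have U0 : prod_nbhs0 [set x : forall m, E m | W (x n)].
      exists n.+1, (onlyat W); split.
        apply: (onlyatP (P := fun m V => nbhs (0 : E m) V)) => // m; exact: filterT.
      by move=> x Hx; have := Hx n (ltnSn n); rewrite onlyat_n.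
    have [r [r0 Hr]] := Bb _ U0.
    exists r; split => // t rt _ [x Bx <-]; have [u Wu <-] := Hr t rt x Bx.
    by exists (u n).
  case/choice => beta Hbeta.
  have [a [_ Ha]] := combine beta 0.
  exists a => x Bx n; have [Am _] := HA n.
  apply: Am _ _ (Ha n) _ _; apply: Hbeta; by exists x.
Qed.

End Parts.
Section Part2.
Variable R : realType.

Lemma hull_coord (E : nat -> tvsType R) (W : forall n, set (E n)) u n :
  dsum_hull W u -> absconvex (W n) -> W n (u n).
Proof.
move=> [k [l [Hk [Hs Hv]]]] aW; have [v [Wv ->]] := Hv n.
apply: balanced => //.
case: (ltnP n k) => nk.
  by apply: le_trans Hs; apply: (@term_le_sum R (fun m => `|l m|)).
by rewrite (Hk n nk).2 normr0.
Qed.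

Lemma part2 (E : nat -> tvsType R) : (forall n, has_fbr (E n)) ->
  fbr_on (@pscale R E) (@dsum_nbhs0 R E) (@finsupp R E).
Proof.
move=> h.
pose A n := projT1 (cid (h n)).
have HA n : _ := projT2 (cid (h n)).
rewrite -/(A _) in HA.
exists (fun a => [set x | finsupp x /\ (forall n, A n (sub a n) (x n) \/ nz (x n)) /\
   (forall n, (a 0 <= n)%N -> nz (x n))]).
split; [|split;[|split;[|split]]].
- move=> a b ab x [fx [H1 H2]]; split => //; split.
    move=> n; case: (H1 n) => [Ax|nx]; last by right.
    by left; have [Am _] := HA n; exact: Am _ _ (sub_mono n ab) _ Ax.
  by move=> n bn; apply: H2; exact: leq_trans (ab 0%N) bn.
- by move=> a x [].
- move=> x [k Hk].
  have : forall n, exists a, A n a (x n).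
    move=> n; have [_ [_ [cov _]]] := HA n.
    by have [a _ ?] := cov (x n) I; exists a.
  case/choice => beta Hbeta.
  have [a [ka Ha]] := combine beta k.
  exists a => //; split; first by exists k.
  split.
    by move=> n; left; have [Am _] := HA n; exact: Am _ _ (Ha n) _ (Hbeta n).
  by move=> n an; rewrite Hk; [exact: nz0 | exact: leq_trans ka an].
- move=> a U [W [WH WU]].
  have [r [r0 Hr]] : exists r : R, 0 < r /\ forall n, (n < a 0)%N -> forall t, r < `|t| ->
      forall y, A n (sub a n) y -> W n (t^-1 *: y).
    apply: (@finite_r R (a 0) (fun n r => forall t, r < `|t| ->
      forall y, A n (sub a n) y -> W n (t^-1 *: y))).
    + move=> n r r' H rr' t rt y Ay; apply: H => //; lra.
    + move=> n _; have [_ [_ [_ [Ab _]]]] := HA n.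
      have [r [r0 Hr]] := Ab (sub a n) (W n) (WH n).1.
      exists r; split => // t rt y Ay; have [w Ww e] := Hr t rt y Ay.
      by rewrite -e scalerA mulVf ?scale1r //; exact: t_neq0 r0 rt.
  have p2 : forall m, (0:R) < 2 ^+ m by move=> m; apply: exprn_gt0.
  exists (2 ^+ (a 0) * r); split; first exact: mulr_gt0.
  move=> t rt x [[K0 HK0] [Hx Htail]].
  have t0 : t != 0 by apply: (t_neq0 _ rt); exact: mulr_gt0.
  exists (pscale t^-1 x); last first.
    apply: functional_extensionality_dep => n.
    by rewrite /pscale scalerA divff // scale1r.
  apply: WU.
  exists (maxn K0 (a 0)), (fun n => if (n < maxn K0 (a 0))%N then ((2:R) ^+ n.+1)^-1 else 0).
  split; [|split].
  + move=> n Kn; rewrite ltnNge Kn /=; split => //.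
    by rewrite /pscale HK0 ?scaler0 //; exact: leq_trans (leq_maxl _ _) Kn.
  + rewrite (eq_bigr (fun n : 'I_(maxn K0 (a 0)) => ((2:R) ^+ n.+1)^-1)).
      exact: geom_sum.
    move=> i _; rewrite ltn_ord ger0_norm // invr_ge0; exact: exprn_ge0.
  + move=> n; case: ifP => nK.
    * exists (2 ^+ n.+1 *: pscale t^-1 x n); split; last first.
        by rewrite scalerA mulVf ?scale1r // gt_eqF.
      rewrite /pscale scalerA.
      have [nk|kn] := ltnP n (a 0); last exact: nzZ (Htail n kn) _ (WH n).1 _.
      case: (Hx n) => [Ax|nx]; last exact: nzZ nx _ (WH n).1 _.
      have := Hr n nk (t / 2 ^+ n.+1) _ _ Ax; rewrite invf_div; apply.
      rewrite normrM normfV (ger0_norm (ltW (p2 _))) ltr_pdivlMr //.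
      apply: le_lt_trans rt; rewrite mulrC; apply: ler_wpM2r; first exact: ltW.
      have h12 : (1:R) <= 2 by lra.
      exact: (@ler_weXn2l R 2 h12 n.+1 (a 0) nk).
    * exists 0; split; first exact: nbhs_singleton (WH n).1.
      rewrite scaler0 /pscale HK0 ?scaler0 //.
      have Kn : (maxn K0 (a 0) <= n)%N by rewrite leqNgt nK.
      exact: leq_trans (leq_maxl _ _) Kn.
- move=> B BS Bb.
  have : forall n, exists a, [set x n | x in B] `<=` A n a.
    move=> n; have [_ [_ [_ [_ Af]]]] := HA n; apply: Af => //.
    move=> W W0; have [V [V0 aV VW]] := absconvex_nbhs W0.
    have U0 : dsum_nbhs0 (dsum_hull (onlyat V)).
      exists (onlyat V); split => //.
      apply: (onlyatP (P := fun m V => nbhs (0 : E m) V /\ absconvex V)) => // m.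
      by split; [exact: filterT | ].
    have [r [r0 Hr]] := Bb _ U0.
    exists r; split => // t rt _ [x Bx <-]; have [u Hu <-] := Hr t rt x Bx.
    exists (u n) => //; apply: VW.
    have := hull_coord (n:=n) Hu; rewrite onlyat_n; apply; exact: aV.
  case/choice => beta Hbeta.
  have [k Hk] : exists k, forall x, B x -> forall n, (k <= n)%N -> nz (x n).
    pose Q n := exists x, B x /\ ~ nz (x n).
    have HV : forall n, exists V : set (E n), exists X : forall m, E m,
        [/\ nbhs (0 : E n) V, absconvex V & (Q n -> B X /\ ~ V (X n))].
      move=> n; case: (pselect (Q n)) => [[x [Bx nx]]|nQ]; last first.
        exists setT, (fun m => 0); split => //; exact: filterT.
      have [W [W0 nW]] : exists W, nbhs (0 : E n) W /\ ~ W (x n).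
        case: (pselect (exists W, nbhs (0 : E n) W /\ ~ W (x n))) => // nn.
        exfalso; apply: nx => W W0.
        by case: (pselect (W (x n))) => // nW; exfalso; apply: nn; exists W.
      have [V [V0 aV VW]] := absconvex_nbhs W0.
      by exists V, x; split => // _; split => // /VW.
    pose V n := projT1 (cid (HV n)).
    have HX n : _ := projT2 (cid (HV n)).
    rewrite -/(V _) in HX.
    pose X n := projT1 (cid (HX n)).
    have HVX n : _ := projT2 (cid (HX n)).
    rewrite -/(X _) in HVX.
    pose W' n := [set y : E n | V n ((n.+1)%:R *: y)].
    have U0 : dsum_nbhs0 (dsum_hull W').
      exists W'; split => // n; have [V0 aV _] := HVX n; split.
        exact: nbhs0_scale.
      move=> x y a c Wx Wy hac; rewrite /W' /= scalerDr !scalerA.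
      rewrite !(mulrC (n.+1)%:R) -!scalerA; exact: aV.
    have [r [r0 Hr]] := Bb _ U0.
    exists (Num.Def.archi_bound r) => x Bx n kn.
    case: (pselect (nz (x n))) => // nx; exfalso.
    have [_ _ HQ] := HVX n.
    have [BX nV] := HQ (ex_intro _ x (conj Bx nx)).
    have rt : r < `|(n.+1)%:R : R|.
      rewrite ger0_norm // ; apply: lt_le_trans (archi_boundP (ltW r0)) _.
      by rewrite ler_nat; exact: leq_trans kn (leqnSn n).
    have [u Hu e] := Hr _ rt (X n) BX.
    apply: nV; change (V n (X n n)); rewrite -e /pscale.
    have [_ aV _] := HVX n.
    have : W' n (u n).
      apply: hull_coord Hu _.
      move=> y z a c Wy Wz hac; rewrite /W' /= scalerDr !scalerA.
      rewrite !(mulrC (n.+1)%:R) -!scalerA; exact: aV.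
    done.
  have [a [ka Ha]] := combine beta k.
  exists a => x Bx; split; first exact: BS.
  split.
    move=> n; left; have [Am _] := HA n; apply: Am _ _ (Ha n) _ _.
    by apply: Hbeta; exists x.
  by move=> n an; apply: Hk Bx n (leq_trans ka an).
Qed.

End Part2.

Unset Implicit Arguments.

Theorem proposition2p4 (R : realType) :
  (* (i) linear subspaces *)
  (forall (E : tvsType R) (F : set E),
      linear_subspace F -> has_fbr E ->
      fbr_on (fun (t : R) (x : E) => t *: x) (subspace_nbhs0 F) F) /\
  (* (ii) countable locally convex direct sums *)
  (forall E : nat -> tvsType R,
      (forall n, has_fbr (E n)) ->
      fbr_on (@pscale R E) (@dsum_nbhs0 R E) (@finsupp R E)) /\
  (* (iii) countable products *)
  (forall E : nat -> tvsType R,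
      (forall n, has_fbr (E n)) ->
      fbr_on (@pscale R E) (@prod_nbhs0 R E) setT).
Proof.
split; first by move=> E F; exact: part1.
split; first by move=> E; exact: part2.
by move=> E; exact: part3.
Qed.
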